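(* Let $G$ be a graph of the form $G=B\cup G_1\cup\cdots\cup G_m$ with $m\ge 2$, where $B,G_1,\dots,G_m$ are subgraphs, the graphs $G_1,\dots,G_m$ are pairwise vertex-disjoint, and each $G_i$ shares exactly one vertex $x_i$ with $B$. Let $p$ be an integer such that $\mathrm{pw}(G_i;x_i)\le p$ for all $i\in\{2,\dots,m\}$. Then for every $x\in V(B)$, $$\mathrm{pw}(G;x)\le \max\{\mathrm{pw}(B;x_1)+p+1,\ \mathrm{pw}(G_1;x_1)\}.$$
   Context: A path-decomposition of $G$ is a sequence $(X_0,\dots,X_s)$ of subsets of $V(G)$ such that for each vertex $v$ the indices $i$ with $v\in X_i$ form a non-empty interval, and each edge has both ends in some $X_i$; its width is $\max_i|X_i|-1$. For $x\in V(G)$, $\mathrm{pw}(G;x)$ denotes the minimum width of a path-decomposition $(X_0,\dots,X_s)$ of $G$ with $x\in X_0$. *)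

(* Defs.v *)
From mathcomp Require Import all_boot.
From Stdlib Require Import ClassicalEpsilon.
Set Implicit Arguments. Unset Strict Implicit. Unset Printing Implicit Defensive.

Record graph (T : finType) := Graph { gV : {set T}; gE : {set {set T}} }.

Definition wf_graph (T : finType) (G : graph T) : Prop :=
  forall e, e \in gE G -> #|e| = 2 /\ e \subset gV G.

Definition path_decomposition (T : finType) (G : graph T) (X : seq {set T}) : Prop :=
  [/\ X != [::],
      (forall i, i < size X -> nth set0 X i \subset gV G),
      (forall v, v \in gV G ->
         exists a b, a <= b /\ b < size X /\
           forall i, i < size X -> (v \in nth set0 X i) = (a <= i <= b)) &
      (forall e, e \in gE G -> exists2 i, i < size X & e \subset nth set0 X i)].

Definition pd_width (T : finType) (X : seq {set T}) : nat :=
  (\max_(Y <- X) #|Y|).-1.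

Definition is_pw (T : finType) (G : graph T) (x : T) (k : nat) : Prop :=
  (exists X, [/\ path_decomposition G X, x \in nth set0 X 0 & pd_width X = k]) /\
  (forall X, path_decomposition G X -> x \in nth set0 X 0 -> k <= pd_width X).

Definition pw (T : finType) (G : graph T) (x : T) : nat :=
  epsilon (inhabits 0) (is_pw G x).

(* Main.v *)
Require Import Defs.
From mathcomp Require Import all_boot.
From mathcomp Require Import zify.
From Stdlib Require Import ClassicalEpsilon Classical.
Set Implicit Arguments. Unset Strict Implicit. Unset Printing Implicit Defensive.


Lemma min_exists (P : nat -> Prop) n : P n -> exists k, P k /\ forall j, P j -> k <= j.
Proof.
elim/ltn_ind: n => n IH Pn.
case: (classic (exists j, j < n /\ P j)) => [[j [hj Pj]]|h]; first exact: IH j hj Pj.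
exists n; split=> // j Pj; rewrite leqNgt; apply/negP => hj; apply h; by exists j.
Qed.

Lemma pw_spec (T : finType) (H : graph T) v X :
  path_decomposition H X -> v \in nth set0 X 0 -> is_pw H v (pw H v).
Proof.
move=> hX hv.
have [k [[Y [hY hvY hw]] hmin]] := @min_exists
  (fun k => exists Y, [/\ path_decomposition H Y, v \in nth set0 Y 0 & pd_width Y = k])
  _ (ex_intro _ X (And3 hX hv erefl)).
rewrite /pw; apply: epsilon_spec; exists k; split; first by exists Y.
move=> Z hZ hvZ; apply: hmin; by exists Z.
Qed.

Lemma pw_le (T : finType) (H : graph T) v X :
  path_decomposition H X -> v \in nth set0 X 0 -> pw H v <= pd_width X.
Proof. move=> hX hv; have [_ h] := pw_spec hX hv; exact: h. Qed.

Lemma pd_single (T : finType) (H : graph T) : wf_graph H -> path_decomposition H [:: gV H].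
Proof.
move=> hwf; split => //.
- by case.
- move=> v hv; exists 0, 0; do !split => //; case => [|i] //= _; by rewrite hv.
- move=> e he; exists 0 => //; by case: (hwf e he).
Qed.

Lemma pw_dec (T : finType) (H : graph T) v : wf_graph H -> v \in gV H ->
  exists X, [/\ path_decomposition H X, v \in nth set0 X 0 &
     forall i, #|nth set0 X i| <= (pw H v).+1].
Proof.
move=> hwf hv.
have [[Y [hY hvY hw]] _] := @pw_spec T H v _ (pd_single hwf) hv.
exists Y; split => // i.
case: (ltnP i (size Y)) => hi; last by rewrite nth_default // cards0.
have : #|nth set0 Y i| <= \max_(S <- Y) #|S| := @leq_bigmax_seq _ Y xpredT (fun S : {set T} => #|S|) _ (mem_nth set0 hi) isT.
rewrite /pd_width in hw; lia.
Qed.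

Lemma width_le (T : finType) (X : seq {set T}) w :
  (forall i, #|nth set0 X i| <= w.+1) -> pd_width X <= w.
Proof.
move=> h; rewrite /pd_width.
have : \max_(Y <- X) #|Y| <= w.+1.
  apply/bigmax_leqP_seq => Y hY _.
  by rewrite -(nth_index set0 hY).
lia.
Qed.

Lemma mem_bigcup_nat (T : finType) (F : nat -> {set T}) a n v :
  v \in \bigcup_(a <= i < n) F i -> exists2 i, a <= i < n & v \in F i.
Proof.
elim: n => [|n IH]; first by rewrite big_geq // in_set0.
case: (leqP a n) => h; last by rewrite big_geq // in_set0.
rewrite big_nat_recr // in_setU => /orP [/IH [i hi hv]|hv].
  by exists i => //; lia.
by exists n => //; lia.
Qed.

Lemma int_all (T : finType) (X : seq {set T}) v a b : b < size X ->
  (forall i, i < size X -> (v \in nth set0 X i) = (a <= i <= b)) ->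
  forall i, (v \in nth set0 X i) = (a <= i <= b).
Proof.
move=> hb h i; case: (ltnP i (size X)) => hi; first exact: h.
rewrite nth_default // in_set0; lia.
Qed.


Definition ins (T : finType) (D Z : seq {set T}) k :=
  take k.+1 D ++ map (setU (nth set0 D k :&: nth set0 D k.+1)) Z ++ drop k.+1 D.

Lemma size_ins (T : finType) (D Z : seq {set T}) k : k < size D ->
  size (ins D Z k) = size D + size Z.
Proof. move=> hk; rewrite /ins !size_cat size_takel // size_map size_drop; lia. Qed.

Lemma nth_ins (T : finType) (D Z : seq {set T}) k i : k < size D ->
  nth set0 (ins D Z k) i =
  if i <= k then nth set0 D i
  else if i <= k + size Z then (nth set0 D k :&: nth set0 D k.+1) :|: nth set0 Z (i - k.+1)
  else nth set0 D (i - size Z).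
Proof.
move=> hk; rewrite /ins nth_cat size_takel //.
case: (leqP i k) => h1.
  by rewrite ifT // nth_take.
rewrite ifF; last lia.
rewrite nth_cat size_map.
case: (leqP i (k + size Z)) => h2.
  by rewrite ifT ?(nth_map set0) //; lia.
rewrite ifF; last lia.
rewrite nth_drop; congr nth; lia.
Qed.

Ltac slia := repeat match goal with
  | H : is_true (_ \in _) |- _ => clear H
  | H : forall _, _ |- _ => clear H
  | H : path_decomposition _ _ |- _ => clear H
  | H : @eq {set _} _ _ |- _ => clear H
  | H : @eq (seq _) _ _ |- _ => clear H
  end; lia.

Lemma pd_ins (T : finType) (H K G' : graph T) D Z k y :
  path_decomposition H D -> path_decomposition K Z -> k < size D ->
  y \in nth set0 D k -> y \in nth set0 Z 0 ->
  (forall v, v \in gV H -> v \in gV K -> v = y) ->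
  gV G' = gV H :|: gV K -> gE G' = gE H :|: gE K ->
  path_decomposition G' (ins D Z k).
Proof.
move=> [Dne Dsub Dint Dedge] [Zne Zsub Zint Zedge] hk hyD hyZ hHK hV hE.
have szZ : 0 < size Z by case: (Z) Zne.
have hsz := size_ins Z hk.
have hDV : forall i v, v \in nth set0 D i -> v \in gV H.
  move=> i v; case: (ltnP i (size D)) => hi; first exact: (subsetP (Dsub i hi)).
  by rewrite nth_default // in_set0.
have hZV : forall i v, v \in nth set0 Z i -> v \in gV K.
  move=> i v; case: (ltnP i (size Z)) => hi; first exact: (subsetP (Zsub i hi)).
  by rewrite nth_default // in_set0.
have hyH : y \in gV H := hDV _ _ hyD.
have hyK : y \in gV K := hZV _ _ hyZ.
split.
- apply/eqP => h0; have := congr1 size h0; rewrite hsz /=; slia.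
- move=> i hi; rewrite (nth_ins _ _ hk) hV; apply/subsetP => v; rewrite in_setU.
  case: ifP => _; first by move/hDV ->.
  case: ifP => _; last by move/hDV ->.
  rewrite in_setU in_setI => /orP [/andP [/hDV -> _] | /hZV ->] //; by rewrite orbT.
- move=> v; rewrite hV in_setU.
  case: (boolP (v \in gV H)) => hvH hvv.
  + case: (eqVneq v y) => [->|hvy].
    * have [a [b [hab [hb hD0]]]] := Dint y hyH.
      have [az [bz [habz [hbz hZ0]]]] := Zint y hyK.
      have hD := int_all hb hD0; have hZ := int_all hbz hZ0.
      have hak : a <= k <= b by rewrite -hD.
      have haz : az = 0 by move: (hZ 0); rewrite hyZ; slia.
      exists a, (if b <= k then k.+1 + bz else b + size Z).
      split; first by case: ifP; slia.
      split; first by case: ifP; slia.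
      move=> i hi; rewrite (nth_ins _ _ hk).
      case: (leqP i k) => h1; first by rewrite hD; case: ifP; slia.
      case: (leqP i (k + size Z)) => h2.
        rewrite in_setU in_setI !hD hZ; case: ifP; slia.
      rewrite hD; case: ifP; slia.
    * have vZ : forall l, (v \in nth set0 Z l) = false.
        move=> l; apply/negP => /hZV hvK; move/eqP: hvy; apply; exact: hHK.
      have [a [b [hab [hb hD0]]]] := Dint v hvH.
      have hD := int_all hb hD0.
      exists (if a <= k then a else a + size Z), (if b <= k then b else b + size Z).
      split; first by case: ifP; case: ifP; slia.
      split; first by case: ifP; slia.
      move=> i hi; rewrite (nth_ins _ _ hk).
      case: (leqP i k) => h1; first by rewrite hD; case: ifP; case: ifP; slia.
      case: (leqP i (k + size Z)) => h2.
        rewrite in_setU in_setI !hD vZ orbF; case: ifP; case: ifP; slia.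
      rewrite hD; case: ifP; case: ifP; slia.
  + rewrite /= in hvv.
    have vD : forall i, (v \in nth set0 D i) = false.
      by move=> i; apply/negP => /hDV; rewrite (negbTE hvH).
    have [az [bz [habz [hbz hZ0]]]] := Zint v hvv.
    have hZ := int_all hbz hZ0.
    exists (az + k.+1), (bz + k.+1).
    split; first slia. split; first slia.
    move=> i hi; rewrite (nth_ins _ _ hk).
    case: (leqP i k) => h1; first by rewrite vD; slia.
    case: (leqP i (k + size Z)) => h2.
      rewrite in_setU in_setI !vD /= hZ; slia.
    rewrite vD; slia.
- move=> e; rewrite hE in_setU => /orP [heH|heK].
  + have [i hi hs] := Dedge e heH.
    case: (leqP i k) => h.
      exists i; first slia. by rewrite (nth_ins _ _ hk) h.
    exists (i + size Z); first slia.
    rewrite (nth_ins _ _ hk) ifF; last slia.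
    rewrite ifF; last slia. by rewrite addnK.
  + have [l hl hs] := Zedge e heK.
    exists (k.+1 + l); first slia.
    rewrite (nth_ins _ _ hk) ifF; last slia.
    rewrite ifT; last slia. rewrite addKn. exact: subset_trans hs (subsetUr _ _).
Qed.



Lemma nth_ins_lo (T : finType) (D Z : seq {set T}) k i : k < size D -> i <= k ->
  nth set0 (ins D Z k) i = nth set0 D i.
Proof. by move=> hk hi; rewrite (nth_ins _ _ hk) hi. Qed.

Lemma nth_ins_mid (T : finType) (D Z : seq {set T}) k i : k < size D -> k < i -> i <= k + size Z ->
  nth set0 (ins D Z k) i = (nth set0 D k :&: nth set0 D k.+1) :|: nth set0 Z (i - k.+1).
Proof. move=> hk h1 h2; rewrite (nth_ins _ _ hk) ifF ?h2 //; slia. Qed.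

Lemma nth_ins_hi (T : finType) (D Z : seq {set T}) k i : k < size D -> k + size Z < i ->
  nth set0 (ins D Z k) i = nth set0 D (i - size Z).
Proof. move=> hk h1; rewrite (nth_ins _ _ hk) ifF; last slia. rewrite ifF //; slia. Qed.

Definition slot (T : finType) (D : seq {set T}) (b : nat) (u : T) : Prop :=
  exists k, [/\ k < size D, u \in nth set0 D k,
    #|nth set0 D k :&: nth set0 D k.+1| <= b.+1 &
    (u \notin nth set0 D k.+1 -> #|nth set0 D k| <= b.+2)].

Lemma slot_ins (T : finType) (H K : graph T) D Z k0 y u b :
  (forall i v, v \in nth set0 D i -> v \in gV H) ->
  (forall i v, v \in nth set0 Z i -> v \in gV K) ->
  (forall v, v \in gV H -> v \in gV K -> v = y) ->
  k0 < size D -> y \in nth set0 D k0 -> 0 < size Z -> u != y ->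
  slot D b u -> slot (ins D Z k0) b u.
Proof.
move=> hDV hZV hHK hk0 hy hZ huy [k [hk hku hI h4]].
have hsz := size_ins Z hk0.
case: (ltngtP k k0) => hkk.
- exists k; rewrite !nth_ins_lo //; try slia; split => //; slia.
- exists (k + size Z); rewrite !nth_ins_hi //; try slia.
  have -> : k + size Z - size Z = k by slia.
  have -> : (k + size Z).+1 - size Z = k.+1 by slia.
  split => //; slia.
- subst k0.
  case: (boolP (u \in nth set0 D k.+1)) => huk1.
  + exists (k + size Z); rewrite nth_ins_mid //; try slia.
    rewrite nth_ins_hi //; try slia.
    have -> : (k + size Z).+1 - size Z = k.+1 by slia.
    split; first slia.
    * by rewrite in_setU in_setI hku huk1.
    * apply: leq_trans _ hI; apply: subset_leq_card; apply/subsetP => v.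
      rewrite !(in_setI, in_setU) => /andP [/orP [/andP [-> ->] | hvZ] hv1] //.
      have e := hHK v (hDV _ _ hv1) (hZV _ _ hvZ); subst v.
      by rewrite hy hv1.
    * by rewrite huk1.
  + exists k; rewrite nth_ins_lo //.
    rewrite nth_ins_mid //; try slia.
    rewrite subnn.
    split; [slia | done | | by move=> _; exact: h4].
    case: (boolP (y \in nth set0 D k.+1)) => hy1.
    * apply: leq_trans _ hI; apply: subset_leq_card; apply/subsetP => v.
      rewrite !(in_setI, in_setU) => /andP [hv0 /orP [/andP [_ ->] | hvZ]]; first by rewrite hv0.
      have e := hHK v (hDV _ _ hv0) (hZV _ _ hvZ); subst v.
      by rewrite hy hy1.
    * have hsub : nth set0 D k :&: ((nth set0 D k :&: nth set0 D k.+1) :|: nth set0 Z 0)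
                   \subset y |: (nth set0 D k :&: nth set0 D k.+1).
        apply/subsetP => v; rewrite !(in_setI, in_setU, in_set1).
        move=> /andP [hv0 /orP [/andP [_ ->] | hvZ]]; first by rewrite hv0 orbT.
        by rewrite (hHK v (hDV _ _ hv0) (hZV _ _ hvZ)) eqxx.
      have hsub2 : nth set0 D k :&: nth set0 D k.+1 \subset (nth set0 D k :\ u) :\ y.
        apply/subsetP => v; rewrite in_setI !in_setD1 => /andP [hv0 hv1].
        rewrite hv0 andbT; apply/andP; split.
          by apply: contraNneq hy1 => <-.
        by apply: contraNneq huk1 => <-.
      have c1 := cardsD1 u (nth set0 D k).
      have c2 := cardsD1 y (nth set0 D k :\ u).
      rewrite hku in c1; rewrite in_setD1 hy eq_sym huy /= in c2.
      have c3 := subset_leq_card hsub2.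
      have c4 := subset_leq_card hsub.
      have c5 := h4 huk1.
      rewrite cardsU1 in c4.
      move: c1 c2 c3 c4 c5.
      set a1 := #|_ :&: _|; set a2 := #|_ :\ y|; set a3 := #|_ :\ u|.
      set a4 := #|nth set0 D k|; set a5 := #|_ :&: (_ :|: _)|.
      case: (y \notin _) => /=; slia.
Qed.

Lemma nth_revx (T : finType) (W : seq {set T}) x i :
  nth set0 (map (setU [set x]) (rev W)) i =
  if i < size W then x |: nth set0 W (size W - i.+1) else set0.
Proof.
case: ifP => h.
  by rewrite (nth_map set0) ?size_rev // nth_rev.
rewrite nth_default // size_map size_rev; slia.
Qed.

Lemma pd_revx (T : finType) (H : graph T) W x :
  path_decomposition H W -> x \in gV H ->
  path_decomposition H (map (setU [set x]) (rev W)).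
Proof.
move=> [Wne Wsub Wint Wedge] hx.
have hW : 0 < size W by case: (W) Wne.
split.
- by rewrite -size_eq0 size_map size_rev -lt0n.
- move=> i; rewrite size_map size_rev => hi; rewrite nth_revx hi.
  rewrite subUset sub1set hx /=; apply: Wsub; slia.
- move=> v hv; case: (eqVneq v x) => [->|hvx].
    exists 0, (size W).-1; split; first slia. split; first by rewrite size_map size_rev; slia.
    move=> i; rewrite size_map size_rev => hi; rewrite nth_revx hi in_setU1 eqxx /=; slia.
  have [a [b [hab [hb hD]]]] := Wint v hv.
  exists (size W - b.+1), (size W - a.+1); split; first slia.
  split; first by rewrite size_map size_rev; slia.
  move=> i; rewrite size_map size_rev => hi; rewrite nth_revx hi in_setU1 (negbTE hvx) /=.
  rewrite hD; slia.
- move=> e he; have [i hi hs] := Wedge e he.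
  exists (size W - i.+1); first by rewrite size_map size_rev; slia.
  rewrite nth_revx ifT; last slia.
  have -> : size W - (size W - i.+1).+1 = i by slia.
  exact: subset_trans hs (subsetUr _ _).
Qed.

Lemma slot_revx (T : finType) (H : graph T) W x u b :
  path_decomposition H W -> (forall i, #|nth set0 W i| <= b.+1) -> u \in gV H ->
  slot (map (setU [set x]) (rev W)) b u.
Proof.
move=> [Wne Wsub Wint Wedge] hb hu.
have [a [c [hac [hc hD]]]] := Wint u hu.
exists (size W - a.+1); rewrite size_map size_rev !nth_revx.
have -> : size W - (size W - a.+1).+1 = a by slia.
rewrite ifT; last slia.
split; first slia.
- by rewrite in_setU1 hD ?orbT //; slia.
- case: a hac hD => [|a] hac hD.
    rewrite ifF; last slia. by rewrite setI0 cards0.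
  rewrite ifT; last slia.
  have -> : size W - (size W - a.+2).+2 = a by slia.
  rewrite -setUIr.
  have hsub : nth set0 W a.+1 :&: nth set0 W a \subset nth set0 W a.+1 :\ u.
    apply/subsetP => v; rewrite in_setI in_setD1 => /andP [h1 h2]; rewrite h1 andbT.
    apply: contraTneq h2 => ->; rewrite hD; slia.
  have c1 := subset_leq_card hsub.
  have c2 := cardsD1 u (nth set0 W a.+1).
  rewrite hD in c2; last slia.
  have c3 := hb a.+1.
  rewrite cardsU1; move: c1 c2 c3.
  have -> : (a < a.+1 <= c) = true by apply/idP; slia.
  case: (x \notin _) => /=; slia.
- move=> _; rewrite cardsU1; have := hb a; case: (x \notin _) => /=; slia.
Qed.



Lemma pd_bags (T : finType) (H : graph T) D : path_decomposition H D ->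
  forall i v, v \in nth set0 D i -> v \in gV H.
Proof.
move=> [_ Dsub _ _] i v; case: (ltnP i (size D)) => hi; first exact: (subsetP (Dsub i hi)).
by rewrite nth_default // in_set0.
Qed.

Lemma cardU_le (T : finType) (A B : {set T}) : #|A :|: B| <= #|A| + #|B|.
Proof. have := cardsUI A B; lia. Qed.

Theorem lemma3p3 (T : finType) (G B : graph T) (m : nat) (Gs : nat -> graph T)
  (xs : nat -> T) (p : nat) (x : T) :
  2 <= m ->
  wf_graph B ->
  (forall i, 1 <= i <= m -> wf_graph (Gs i)) ->
  gV G = gV B :|: \bigcup_(1 <= i < m.+1) gV (Gs i) ->
  gE G = gE B :|: \bigcup_(1 <= i < m.+1) gE (Gs i) ->
  (forall i j, 1 <= i <= m -> 1 <= j <= m -> i != j ->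
     [disjoint gV (Gs i) & gV (Gs j)]) ->
  (forall i, 1 <= i <= m -> gV B :&: gV (Gs i) = [set xs i]) ->
  (forall i, 2 <= i <= m -> pw (Gs i) (xs i) <= p) ->
  x \in gV B ->
  pw G x <= maxn (pw B (xs 1) + p + 1) (pw (Gs 1) (xs 1)).
Proof.
move=> hm hwfB hwfG hV hE hdisj hint hp hx.
have hxsB : forall i, 1 <= i <= m -> xs i \in gV B.
  move=> i hi; have := hint i hi; move/setP/(_ (xs i)).
  by rewrite in_setI in_set1 eqxx => /andP [].
have hxsG : forall i, 1 <= i <= m -> xs i \in gV (Gs i).
  move=> i hi; have := hint i hi; move/setP/(_ (xs i)).
  by rewrite in_setI in_set1 eqxx => /andP [].
have hBG : forall i v, 1 <= i <= m -> v \in gV B -> v \in gV (Gs i) -> v = xs i.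
  move=> i v hi h1 h2; have := hint i hi; move/setP/(_ v).
  by rewrite in_setI h1 h2 in_set1 /= => /esym/eqP.
have hGG : forall i j v, 1 <= i <= m -> 1 <= j <= m -> i != j ->
    v \in gV (Gs i) -> v \in gV (Gs j) -> False.
  move=> i j v hi hj hij h1 h2; have := disjoint_setI0 (hdisj i j hi hj hij).
  by move/setP/(_ v); rewrite in_setI h1 h2 in_set0.
have hdist : forall i j, 1 <= i <= m -> 1 <= j <= m -> i != j -> xs i != xs j.
  move=> i j hi hj hij; apply/eqP => e; apply: (hGG i j (xs i) hi hj hij (hxsG i hi)).
  rewrite e; exact: hxsG.
have h1m : 1 <= 1 <= m by slia.
set b := pw B (xs 1); set c := pw (Gs 1) (xs 1).
have [W [hW hW0 hWb]] := pw_dec hwfB (hxsB 1 h1m).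
have [Z1 [hZ1 hZ10 hZ1b]] := pw_dec (hwfG 1 h1m) (hxsG 1 h1m).
have hR := pd_revx hW hx.
have szW : 0 < size W by case: hW => Wne _ _ _; case: (W) Wne.
have szZ1 : 0 < size Z1 by case: hZ1 => Zne _ _ _; case: (Z1) Zne.
have szR : size (map (setU [set x]) (rev W)) = size W by rewrite size_map size_rev.
have hRb : forall i, #|nth set0 (map (setU [set x]) (rev W)) i| <= b.+2.
  move=> i; rewrite nth_revx; case: ifP => _; last by rewrite cards0.
  rewrite cardsU1; have := hWb (size W - i.+1); case: (_ \notin _) => /=; slia.
pose Vn n := gV B :|: \bigcup_(1 <= i < n) gV (Gs i).
pose En n := gE B :|: \bigcup_(1 <= i < n) gE (Gs i).
have claim : forall n, 2 <= n <= m.+1 -> exists D,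
    [/\ path_decomposition (Graph (Vn n) (En n)) D, x \in nth set0 D 0,
        (forall i, #|nth set0 D i| <= maxn (b + p + 2) c.+1) &
        (forall j, n <= j <= m -> slot D b (xs j))].
  elim=> [|n IH] hn; first slia.
  case: (eqVneq n 1) => [en1 | hn1].
  - subst n.
    set R := map (setU [set x]) (rev W).
    have hk : (size R).-1 < size R by rewrite szR ltn_predL.
    have hyk : xs 1 \in nth set0 R (size R).-1.
      rewrite /R nth_revx szR ifT; last slia.
      have -> : size W - (size W).-1.+1 = 0 by slia.
      by rewrite in_setU hW0 orbT.
    exists (ins R Z1 (size R).-1); split.
    + apply: (pd_ins hR hZ1 hk hyk hZ10).
      * by move=> v h1 h2; exact: hBG.
      * by rewrite /= /Vn big_nat1.
      * by rewrite /= /En big_nat1.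
    + rewrite nth_ins_lo //.
      rewrite /R nth_revx ifT; last slia.
      by rewrite in_setU in_set1 eqxx.
    + move=> i; rewrite (nth_ins _ _ hk).
      case: ifP => _; first by have := hRb i; rewrite -/R; slia.
      case: ifP => _; last by have := hRb (i - size Z1); rewrite -/R; slia.
      rewrite (nth_default _ (_ : size R <= (size R).-1.+1)); last slia.
      rewrite setI0 set0U; have := hZ1b (i - ((size R).-1).+1); rewrite -/c; slia.
    + move=> j hj.
      apply: (slot_ins (pd_bags hR) (pd_bags hZ1) _ hk hyk szZ1).
      * by move=> v h1 h2; exact: hBG.
      * apply: hdist; slia.
      * apply: slot_revx hW hWb _; apply: hxsB; slia.
  - have hn2 : 2 <= n <= m by slia.
    have hn' : 2 <= n <= m.+1 by slia.
    have [D [hD hD0 hDb hDs]] := IH hn'.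
    have hnm : 1 <= n <= m by slia.
    have hnn : n <= n <= m by slia.
    have [k [hk hyk hIk h4k]] := hDs n hnn.
    have [Zn [hZn hZn0 hZnb]] := pw_dec (hwfG n hnm) (hxsG n hnm).
    have szZn : 0 < size Zn by case: hZn => Zne _ _ _; case: (Zn) Zne.
    have hHK : forall v, v \in gV (Graph (Vn n) (En n)) -> v \in gV (Gs n) -> v = xs n.
      move=> v; rewrite /= /Vn in_setU => /orP [hvB | /mem_bigcup_nat [i hi hvi]] hvG.
        exact: hBG.
      exfalso; apply: (hGG i n v _ hnm _ hvi hvG); slia.
    exists (ins D Zn k); split.
    + apply: (pd_ins hD hZn hk hyk hZn0 hHK).
      * by rewrite /= /Vn big_nat_recr ?setUA //; slia.
      * by rewrite /= /En big_nat_recr ?setUA //; slia.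
    + by rewrite nth_ins_lo.
    + move=> i; rewrite (nth_ins _ _ hk).
      case: ifP => _; first exact: hDb.
      case: ifP => _; last exact: hDb.
      have := cardU_le (nth set0 D k :&: nth set0 D k.+1) (nth set0 Zn (i - k.+1)).
      have := hZnb (i - k.+1); have := hp n hn2; rewrite -/b in hIk; slia.
    + move=> j hj.
      apply: (slot_ins (pd_bags hD) (pd_bags hZn) hHK hk hyk szZn).
        apply: hdist; slia.
      apply: hDs; slia.
have hmm : 2 <= m.+1 <= m.+1 by slia.
have [D [hD hD0 hDb _]] := claim m.+1 hmm.
have eG : G = Graph (Vn m.+1) (En m.+1) by case: G hV hE => VG EG /= -> ->.
rewrite eG; apply: leq_trans (pw_le hD hD0) _; apply: width_le => i.
have := hDb i; slia.
Qed.
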